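(* Let $G\in L^\infty_{q\times p}$ and let $\mathcal M$ be a closed subspace of $H^2_p$ with $S^*\mathcal M\subset\mathcal M$ and $\ker S^*\subset\mathcal M$. Assume $D^\circ_{\mathcal M}$ is invertible. Then the range $\mathcal F$ of $D_{\mathcal M}Q_{\mathcal M}$ is closed, and the orthogonal projection of $H^2_p$ onto $\mathcal F$ is $P_{\mathcal F}=D_{\mathcal M}Q_{\mathcal M}(D^\circ_{\mathcal M})^{-2}Q_{\mathcal M}^*D_{\mathcal M}$.
   Context: $H:H^2_p\to K^2_q$, $Hf=P_-(Gf)$, with $P_-$ the orthogonal projection of $L^2_q$ onto $K^2_q=L^2_q\ominus H^2_q$; $S$ forward shift on $H^2_p$; $P_{\mathcal M}$ orthogonal projection onto $\mathcal M$; $R_{\mathcal M}$ orthogonal projection onto $S^*\mathcal M$; $Q_{\mathcal M}=SR_{\mathcal M}$; $\gamma_{\mathcal M}=\|H|_{\mathcal M}\|$; $D_{\mathcal M}=(\gamma_{\mathcal M}^2I-P_{\mathcal M}H^*HP_{\mathcal M})^{1/2}$; $D^\circ_{\mathcal M}=(\gamma_{\mathcal M}^2I-S^*P_{\mathcal M}H^*HP_{\mathcal M}S)^{1/2}$. *)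

(* Defs.v *)
From mathcomp Require Import all_boot all_order all_algebra.
From mathcomp Require Import complex.
From mathcomp Require Import all_classical all_reals all_analysis.
Import Order.TTheory GRing.Theory Num.Theory numFieldNormedType.Exports.

Set Implicit Arguments.
Unset Strict Implicit.
Unset Printing Implicit Defensive.

Local Open Scope ring_scope.
Local Open Scope classical_set_scope.

(* Model: H^2_p is identified, via Taylor/Fourier coefficients,
   with l^2(N; C^p): f(z) = sum_k x_k z^k.  K^2_q = L^2_q (-) H^2_q is
   identified with l^2(N; C^q) via y_k = coefficient of z^{-k-1}.
   Operators are functions on all sequences, constrained only on l^2. *)

Section Defs.
Variable R : realType.
Local Notation C := R[i].

Definition seqv (n : nat) := nat -> 'cV[C]_n.

Definition cabs2 (z : C) : R := complex.Re z ^+ 2 + complex.Im z ^+ 2.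
Definition vnorm2 n (v : 'cV[C]_n) : R := \sum_(i < n) cabs2 (v i 0).

Definition l2 n (x : seqv n) : Prop := cvgn (series (fun k => vnorm2 (x k))).
Definition l2norm2 n (x : seqv n) : R := limn (series (fun k => vnorm2 (x k))).
Definition l2norm n (x : seqv n) : R := Num.sqrt (l2norm2 x).

Definition szero n : seqv n := fun _ => 0.
Definition sadd n (x y : seqv n) : seqv n := fun k => x k + y k.
Definition sscale n (a : C) (x : seqv n) : seqv n := fun k => a *: x k.
Definition ssub n (x y : seqv n) : seqv n := fun k => x k - y k.

(* inner product <x,y> (linear in x, conjugate-linear in y), written by the
   polarization identity <x,y> = 1/4 sum_{k=0}^3 i^k ||x + i^k y||^2,
   which equals sum_n y_n^* x_n on l^2. *)
Definition inner n (x y : seqv n) : C :=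
  4%:R^-1 * \sum_(k < 4) ('i ^+ k * (l2norm2 (sadd x (sscale ('i ^+ k) y)))%:C%C).

Definition maps_l2 m n (T : seqv m -> seqv n) := forall x, l2 x -> l2 (T x).

Definition bounded_linear m n (T : seqv m -> seqv n) :=
  [/\ maps_l2 T,
      (forall a x y, l2 x -> l2 y ->
         T (sadd (sscale a x) y) = sadd (sscale a (T x)) (T y))
    & exists c : R, forall x, l2 x -> l2norm (T x) <= c * l2norm x].

Definition is_adjoint m n (T : seqv m -> seqv n) (Ts : seqv n -> seqv m) :=
  maps_l2 Ts /\ forall x y, l2 x -> l2 y -> inner (T x) y = inner x (Ts y).

Definition subspace n (M : set (seqv n)) :=
  [/\ forall x, M x -> l2 x, M (@szero n)
    & forall a x y, M x -> M y -> M (sadd (sscale a x) y)].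

Definition l2closed n (M : set (seqv n)) :=
  forall (u : nat -> seqv n) (x : seqv n), (forall k, M (u k)) -> l2 x ->
    (fun k => l2norm (ssub (u k) x)) @ \oo --> 0 -> M x.

Definition closed_subspace n (M : set (seqv n)) := subspace M /\ l2closed M.

Definition is_orth_proj n (M : set (seqv n)) (P : seqv n -> seqv n) :=
  forall x, l2 x -> M (P x) /\ forall m, M m -> inner (ssub x (P x)) m = 0.

Definition fshift n (x : seqv n) : seqv n :=
  fun k => if k is k'.+1 then x k' else 0.
Definition bshift n (x : seqv n) : seqv n := fun k => x k.+1.

(* unit circle parametrised by t in [0, 2 pi], with Lebesgue measure *)
Definition circ : set R := [set t | 0 <= t <= 2 * pi].

Definition Linf q p (G : R -> 'M[C]_(q, p)) :=
  forall a b,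
  [/\ measurable_fun circ (fun t => complex.Re (G t a b)),
      measurable_fun circ (fun t => complex.Im (G t a b))
    & exists B : R,
        \forall t \ae (@lebesgue_measure R), circ t -> cabs2 (G t a b) <= B].

(* Fourier coefficient hat G(k) = 1/(2pi) int_0^{2pi} G(e^{it}) e^{-ikt} dt *)
Definition fcoef q p (G : R -> 'M[C]_(q, p)) (k : int) : 'M[C]_(q, p) :=
  \matrix_(a, b)
    Complex
      ((2 * pi)^-1 * Rintegral (@lebesgue_measure R) circ
         (fun t => complex.Re (G t a b) * cos (k%:~R * t)
                 + complex.Im (G t a b) * sin (k%:~R * t)))
      ((2 * pi)^-1 * Rintegral (@lebesgue_measure R) circ
         (fun t => complex.Im (G t a b) * cos (k%:~R * t)
                 - complex.Re (G t a b) * sin (k%:~R * t))).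

(* H f = P_-(G f): in coefficients, the coefficient of z^{-k-1} of G f is
   sum_j hat G(-k-j-1) x_j (series converging in C^q). *)
Definition is_hankel q p (G : R -> 'M[C]_(q, p)) (H : seqv p -> seqv q) :=
  forall x, l2 x -> forall k : nat,
    (fun N => vnorm2 (\sum_(j < N) fcoef G (- ((k + j + 1)%N)%:Z) *m x j - H x k))
      @ \oo --> 0.

Definition opnorm_on m n (M : set (seqv m)) (T : seqv m -> seqv n) : R :=
  sup [set l2norm (T x) | x in [set x | M x /\ l2norm x <= 1]].

Definition is_pos_sqrt n (D A : seqv n -> seqv n) :=
  [/\ bounded_linear D, (forall x, l2 x -> 0 <= inner (D x) x)
    & forall x, l2 x -> D (D x) = A x].

Definition is_inverse n (T E : seqv n -> seqv n) :=
  bounded_linear E /\ forall x, l2 x -> E (T x) = x /\ T (E x) = x.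

End Defs.

(* Main.v *)
Require Import Defs.
From mathcomp Require Import all_boot all_order all_algebra.
From mathcomp Require Import complex.
From mathcomp Require Import all_classical all_reals all_analysis.
From mathcomp Require Import ring lra.
Import Order.TTheory GRing.Theory Num.Theory numFieldNormedType.Exports.
Local Open Scope ring_scope.
Local Open Scope classical_set_scope.

Section L2.
Variable R : realType.
Local Notation C := R[i].
Variable n : nat.
Local Notation sv := (seqv R n).

Lemma cabs2_ge0 (z : C) : 0 <= cabs2 z.
Proof. by rewrite /cabs2 addr_ge0 // sqr_ge0. Qed.

Lemma cabs2_eq0 (z : C) : cabs2 z = 0 -> z = 0.
Proof.
case: z => a b; rewrite /cabs2 /= => h.
have ha : a ^+ 2 = 0 by apply/eqP; rewrite eq_le sqr_ge0 andbT -h lerDl sqr_ge0.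
have hb : b ^+ 2 = 0 by apply/eqP; rewrite eq_le sqr_ge0 andbT -h lerDr sqr_ge0.
by move: ha hb => /eqP; rewrite sqrf_eq0 => /eqP -> /eqP; rewrite sqrf_eq0 => /eqP ->.
Qed.

Lemma cabs2_add (u w : C) : cabs2 (u + w) <= 2 * cabs2 u + 2 * cabs2 w.
Proof.
case: u => a b; case: w => c d; rewrite /cabs2 /=.
have h1 := sqr_ge0 (a - c); have h2 := sqr_ge0 (b - d).
have e : 2 * (a ^+ 2 + b ^+ 2) + 2 * (c ^+ 2 + d ^+ 2) - ((a + c) ^+ 2 + (b + d) ^+ 2)
  = (a - c) ^+ 2 + (b - d) ^+ 2 by ring.
by rewrite -subr_ge0 e addr_ge0.
Qed.

Lemma cabs2_mul (u w : C) : cabs2 (u * w) = cabs2 u * cabs2 w.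
Proof. case: u => a b; case: w => c d; rewrite /cabs2 /=; ring. Qed.

Lemma vnorm2_ge0 (v : 'cV[C]_n) : 0 <= vnorm2 v.
Proof. by rewrite /vnorm2 sumr_ge0 // => i _; exact: cabs2_ge0. Qed.

Lemma vnorm2_eq0 (v : 'cV[C]_n) : vnorm2 v = 0 -> v = 0.
Proof.
move=> /eqP; rewrite /vnorm2 psumr_eq0; last by move=> i _; exact: cabs2_ge0.
move=> /allP h; apply/matrixP => i j; rewrite ord1 mxE; apply: cabs2_eq0.
by apply/eqP; apply: h; rewrite mem_index_enum.
Qed.

Lemma vnorm2_bound (a : C) (v w : 'cV[C]_n) :
  vnorm2 (a *: v + w) <= 2 * cabs2 a * vnorm2 v + 2 * vnorm2 w.
Proof.
rewrite /vnorm2 !mulr_sumr -big_split /=; apply: ler_sum => i _.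
rewrite !mxE; apply: le_trans (cabs2_add _ _) _.
by rewrite cabs2_mul mulrA.
Qed.

Lemma vnorm2_0 : vnorm2 (0 : 'cV[C]_n) = 0.
Proof. by rewrite /vnorm2 big1 // => i _; rewrite mxE /cabs2 /= expr0n /= addr0. Qed.

Lemma series0 : series (fun _ : nat => (0 : R)) = fun _ => 0.
Proof. by apply/funext => m; rewrite /series /= big1. Qed.

Lemma l2_0 : l2 (@szero R n).
Proof.
rewrite /l2 /szero; under eq_fun do rewrite vnorm2_0.
rewrite series0; exact: is_cvg_cst.
Qed.

Lemma l2_lin (a : C) (x y : sv) : l2 x -> l2 y -> l2 (sadd (sscale a x) y).
Proof.
move=> hx hy; rewrite /l2.
apply: (@series_le_cvg _ _ ((2 * cabs2 a) *: (fun k => vnorm2 (x k)) + 2 *: (fun k => vnorm2 (y k)))).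
- by move=> k; exact: vnorm2_ge0.
- move=> k /=; rewrite addr_ge0 // mulr_ge0 ?vnorm2_ge0 ?mulr_ge0 ?cabs2_ge0 //.
- by move=> k; rewrite /sadd /sscale /=; exact: vnorm2_bound.
- by apply: is_cvg_seriesD; apply: is_cvg_seriesZ.
Qed.


Lemma l2E {x : sv} : l2 x -> series (fun k => vnorm2 (x k)) @ \oo --> l2norm2 x.
Proof. by []. Qed.

Lemma limE {f : R ^nat} {L : R} : f @ \oo --> L -> limn f = L.
Proof. move=> h; exact: cvg_lim. Qed.

Fixpoint allL2 (s : seq (R * sv)) : Prop :=
  if s is cf :: s' then l2 cf.2 /\ allL2 s' else True.

Lemma lin_cvg (s : seq (R * sv)) : allL2 s ->
  series (fun k => \sum_(cf <- s) cf.1 * vnorm2 (cf.2 k)) @ \oo -->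
    \sum_(cf <- s) cf.1 * l2norm2 cf.2.
Proof.
elim: s => [|cf s IH] /=.
  move=> _; have -> : (fun k => \sum_(cf <- [::] : seq (R * sv)) cf.1 * vnorm2 (cf.2 k)) = fun _ : nat => (0:R).
    by apply/funext => k; rewrite big_nil.
  rewrite series0 big_nil; exact: cvg_cst.
case=> h1 h2.
have -> : (fun k => \sum_(cf0 <- cf :: s) cf0.1 * vnorm2 (cf0.2 k)) =
  cf.1 *: (fun k => vnorm2 (cf.2 k)) + (fun k => \sum_(cf0 <- s) cf0.1 * vnorm2 (cf0.2 k)).
  by apply/funext => k; rewrite big_cons.
rewrite seriesD seriesZ big_cons; apply: cvgD; last exact: IH.
exact: cvgZr.
Qed.

Lemma lin_rel (s : seq (R * sv)) : allL2 s ->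
  (forall k i, \sum_(cf <- s) cf.1 * cabs2 (cf.2 k i 0) = 0) ->
  \sum_(cf <- s) cf.1 * l2norm2 cf.2 = 0.
Proof.
move=> hs h; have := lin_cvg s hs.
have -> : (fun k => \sum_(cf <- s) cf.1 * vnorm2 (cf.2 k)) = fun _ : nat => (0:R).
  apply/funext => k; rewrite /vnorm2.
  under eq_bigr do rewrite mulr_sumr.
  rewrite exchange_big /=; apply: big1 => i _; exact: h.
rewrite series0 => h0; rewrite -(limE h0); apply: limE; exact: cvg_cst.
Qed.

Lemma l2norm2_ge0 (x : sv) : l2 x -> 0 <= l2norm2 x.
Proof.
move=> hx; apply: limr_ge => //; apply: nearW => m.
by rewrite /series /= sumr_ge0 // => k _; exact: vnorm2_ge0.
Qed.

Lemma vnorm2_le_l2 (x : sv) k : l2 x -> vnorm2 (x k) <= l2norm2 x.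
Proof.
move=> hx; apply: le_trans (nondecreasing_cvgn_le _ hx k.+1).
  rewrite /series /= big_nat_recr //= lerDr sumr_ge0 // => j _; exact: vnorm2_ge0.
by apply: nondecreasing_series => j _ _; exact: vnorm2_ge0.
Qed.

Lemma l2norm2_eq0 (x : sv) : l2 x -> l2norm2 x = 0 -> x = @szero R n.
Proof.
move=> hx h0; apply/funext => k; apply: vnorm2_eq0; apply/eqP.
by rewrite eq_le vnorm2_ge0 andbT -h0 vnorm2_le_l2.
Qed.

Lemma series_shift {f : R ^nat} {L : R} :
  series f @ \oo --> L -> series (fun k => f k.+1) @ \oo --> L - f 0%N.
Proof.
move=> h.
have e : series (fun k => f k.+1) = (fun m => series f m.+1 - f 0%N).
  apply/funext => m; rewrite /series /= big_nat_recl //=; ring.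
rewrite e; apply: cvgB; last exact: cvg_cst.
by rewrite (cvg_shiftS (series f)).
Qed.

Lemma series_unshift (f : R ^nat) (L : R) :
  series (fun k => f k.+1) @ \oo --> L -> series f @ \oo --> f 0%N + L.
Proof.
move=> h; rewrite -(cvg_shiftS (series f)).
have e : (fun m => series f m.+1) = (fun m => f 0%N + series (fun k => f k.+1) m).
  apply/funext => m; rewrite /series /= big_nat_recl //.
rewrite e; apply: cvgD => //; exact: cvg_cst.
Qed.

Lemma l2_bshift (x : sv) : l2 x -> l2 (bshift x) /\ l2norm2 x = vnorm2 (x 0%N) + l2norm2 (bshift x).
Proof.
move=> hx; have h := series_shift (l2E hx).
have hb : l2 (bshift x) by apply/cvg_ex; eexists; exact: h.
split => //; have -> : l2norm2 (bshift x) = l2norm2 x - vnorm2 (x 0%N) by exact: (limE h).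
ring.
Qed.

Lemma l2_fshift (x : sv) : l2 x -> l2 (fshift x) /\ l2norm2 (fshift x) = l2norm2 x.
Proof.
move=> hx.
have h := @series_unshift (fun k => vnorm2 (fshift x k)) _ (l2E hx).
rewrite /= vnorm2_0 add0r in h.
by split; [apply/cvg_ex; eexists; exact: h | exact: limE].
Qed.


Lemma sadd_comm (x y : sv) : sadd x y = sadd y x.
Proof. by apply/funext => k; rewrite /sadd addrC. Qed.

Lemma l2_as (c : C) (x y : sv) : l2 x -> l2 y -> l2 (sadd x (sscale c y)).
Proof. by move=> hx hy; rewrite sadd_comm; exact: (l2_lin c _ _ hy hx). Qed.

Lemma l2_add (x y : sv) : l2 x -> l2 y -> l2 (sadd x y).
Proof.
move=> hx hy; have := l2_lin 1 _ _ hx hy.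
by have -> : sscale 1 x = x by apply/funext => k; rewrite /sscale scale1r.
Qed.

Lemma l2_scale (c : C) (x : sv) : l2 x -> l2 (sscale c x).
Proof.
move=> hx; have := l2_lin c _ _ hx (@l2_0).
by have -> : sadd (sscale c x) (@szero R n) = sscale c x
  by apply/funext => k; rewrite /sadd /szero addr0.
Qed.

Lemma l2_sub (x y : sv) : l2 x -> l2 y -> l2 (ssub x y).
Proof.
move=> hx hy; have := l2_as (-1) _ _ hx hy.
by have -> : sadd x (sscale (-1) y) = ssub x y
  by apply/funext => k; rewrite /sadd /sscale /ssub scaleN1r.
Qed.

Lemma i3 : ('i ^+ 3 : C) = - 'i.
Proof. by rewrite exprS sqr_i mulrN1. Qed.

Lemma cplx_eq (z w : C) : complex.Re z = complex.Re w -> complex.Im z = complex.Im w -> z = w.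
Proof. by case: z => a b; case: w => c d /= -> ->. Qed.

Local Notation LL c x y := (l2norm2 (sadd x (sscale c y))).

Definition c1 : C := (1 +i* 0)%C.
Definition cm1 : C := ((-1) +i* 0)%C.
Definition ci : C := (0 +i* 1)%C.
Definition cmi : C := (0 +i* (-1))%C.

Lemma inner4 (x y : sv) : 4%:R * inner x y =
  (LL c1 x y - LL cm1 x y)%:C%C + ci * (LL ci x y - LL cmi x y)%:C%C.
Proof.
have E0 : ('i ^+ 0 : C) = c1 by rewrite expr0.
have E1 : ('i ^+ 1 : C) = ci by rewrite expr1.
have E2 : ('i ^+ 2 : C) = cm1 by rewrite sqr_i; apply: cplx_eq; rewrite /= ?oppr0.
have E3 : ('i ^+ 3 : C) = cmi by rewrite i3; apply: cplx_eq; rewrite /= ?oppr0.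
rewrite /inner mulrA divff ?pnatr_eq0 // mul1r.
rewrite !big_ord_recl big_ord0 !lift0.
rewrite [nat_of_ord ord0]/= E0 E1 E2 E3.
generalize (LL c1 x y) (LL cm1 x y) (LL ci x y) (LL cmi x y) => a b c d.
apply: cplx_eq => /=; ring.
Qed.

Opaque inner l2norm2.

Lemma four_neq0 : (4%:R : C) != 0.
Proof. by rewrite pnatr_eq0. Qed.

Lemma allL2_cons c f s : l2 f -> allL2 s -> allL2 ((c, f) :: s).
Proof. by split. Qed.

Lemma allL2_nil : allL2 [::]. Proof. by []. Qed.

Ltac l2_tac := match goal with
 | |- l2 (sadd _ (sscale _ _)) => refine (l2_as _ _ _ _ _); l2_tac
 | |- l2 (sadd _ _) => refine (l2_add _ _ _ _); l2_tac
 | |- l2 (ssub _ _) => refine (l2_sub _ _ _ _); l2_tac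
 | |- l2 (sscale _ _) => refine (l2_scale _ _ _); l2_tac
 | H : l2 ?x |- l2 ?x => exact H
 end.
Ltac allL2_tac := match goal with
 | |- allL2 [::] => exact: allL2_nil
 | |- allL2 (_ :: _) => refine (allL2_cons _ _ _ _ _); [l2_tac | allL2_tac]
 end.

Ltac gen_entries := repeat match goal with
 | |- context [ @fun_of_matrix _ _ _ (?x ?k) ?i ?j ] =>
   let a := fresh "a" in let b := fresh "b" in
   move: (@fun_of_matrix _ _ _ (x k) i j) => [a b]
 end.
Ltac entries_tac := move=> k i; rewrite !big_cons big_nil /sadd /sscale /ssub !mxE;
  gen_entries; rewrite /cabs2 /=; ring.
Ltac gen_L := repeat match goal with
 | |- context [ l2norm2 ?s ] => let L := fresh "L" in generalize (l2norm2 s); intro L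
 end.
Ltac rel s := let h := fresh "h" in
  have h := lin_rel s ltac:(allL2_tac) ltac:(entries_tac);
  rewrite !big_cons big_nil in h; cbn [fst snd] in h; move: h.

Inductive ex := V (x : sv) | A (e1 e2 : ex) | Sc (c : C) (e : ex) | Sb (e1 e2 : ex).

Fixpoint ev (e : ex) : sv := match e with
  | V x => x | A e1 e2 => sadd (ev e1) (ev e2) | Sc c e => sscale c (ev e)
  | Sb e1 e2 => ssub (ev e1) (ev e2) end.
Fixpoint evE (e : ex) k i : C := match e with
  | V x => x k i 0 | A e1 e2 => evE e1 k i + evE e2 k i | Sc c e => c * evE e k i
  | Sb e1 e2 => evE e1 k i - evE e2 k i end.
Fixpoint okE (e : ex) : Prop := match e with
  | V x => l2 x | A e1 e2 => okE e1 /\ okE e2 | Sc c e => okE e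
  | Sb e1 e2 => okE e1 /\ okE e2 end.

Lemma evE_ok e k i : ev e k i 0 = evE e k i.
Proof.
elim: e => [x|e1 IH1 e2 IH2|c e IH|e1 IH1 e2 IH2] //=.
- by rewrite /sadd mxE IH1 IH2.
- by rewrite /sscale mxE IH.
- by rewrite /ssub !mxE IH1 IH2.
Qed.

Lemma l2_ev e : okE e -> l2 (ev e).
Proof.
elim: e => [x|e1 IH1 e2 IH2|c e IH|e1 IH1 e2 IH2] //=.
- by case=> h1 h2; apply: l2_add; [exact: IH1|exact: IH2].
- by move=> h; apply: l2_scale; exact: IH.
- by case=> h1 h2; apply: l2_sub; [exact: IH1|exact: IH2].
Qed.

Fixpoint allOk (s : seq (R * ex)) : Prop :=
  if s is ce :: s' then okE ce.2 /\ allOk s' else True.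

Lemma lin_relE (s : seq (R * ex)) : allOk s ->
  (forall k i, \sum_(ce <- s) ce.1 * cabs2 (evE ce.2 k i) = 0) ->
  \sum_(ce <- s) ce.1 * l2norm2 (ev ce.2) = 0.
Proof.
move=> hs h.
have := lin_rel [seq (ce.1, ev ce.2) | ce <- s] _ _.
rewrite big_map; apply.
- by elim: s hs {h} => //= ce s IH [h1 h2]; split; [exact: l2_ev|exact: IH].
- move=> k i; rewrite big_map -[X in _ = X](h k i); apply: eq_bigr => ce _ /=.
  by rewrite evE_ok.
Qed.

Ltac ok_tac := cbn [allOk okE fst snd]; repeat split; match goal with
  | H : l2 ?x |- l2 ?x => exact H end.
Ltac tw_tac := move=> k i; rewrite !big_cons big_nil; cbn [fst snd evE];
  gen_entries; rewrite /cabs2 /c1 /cm1 /ci /cmi /=; ring.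
Ltac gen_I := repeat match goal with
 | |- context [ inner ?a ?b ] => let I := fresh "I" in generalize (inner a b); intro I
 end.
Ltac relE s := let h := fresh "h" in
  have h := lin_relE s ltac:(ok_tac) ltac:(tw_tac);
  rewrite !big_cons big_nil in h; cbn [fst snd ev] in h; move: h.

Lemma inner_addl (x x' z : sv) : l2 x -> l2 x' -> l2 z ->
  inner (sadd x x') z = inner x z + inner x' z.
Proof.
move=> hx hx' hz; apply: (mulfI four_neq0); rewrite mulrDr !inner4.
relE ([:: (1, A (A (V x) (V x')) (Sc c1 (V z))); (-1, A (A (V x) (V x')) (Sc cm1 (V z)));
   (-1, A (V x) (Sc c1 (V z))); (1, A (V x) (Sc cm1 (V z)));
   (-1, A (V x') (Sc c1 (V z))); (1, A (V x') (Sc cm1 (V z)))] : seq (R * ex)).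
relE ([:: (1, A (A (V x) (V x')) (Sc ci (V z))); (-1, A (A (V x) (V x')) (Sc cmi (V z)));
   (-1, A (V x) (Sc ci (V z))); (1, A (V x) (Sc cmi (V z)));
   (-1, A (V x') (Sc ci (V z))); (1, A (V x') (Sc cmi (V z)))] : seq (R * ex)).
gen_L => *; apply: cplx_eq => /=; lra.
Qed.
Lemma inner_scalel (a : C) (x z : sv) : l2 x -> l2 z ->
  inner (sscale a x) z = a * inner x z.
Proof.
move=> hx hz; apply: (mulfI four_neq0); rewrite [RHS]mulrCA !inner4.
case: a => ar ai.
relE ([:: (1, A (Sc (ar +i* ai)%C (V x)) (Sc c1 (V z))); (-1, A (Sc (ar +i* ai)%C (V x)) (Sc cm1 (V z)));
   (-ar, A (V x) (Sc c1 (V z))); (ar, A (V x) (Sc cm1 (V z)));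
   (ai, A (V x) (Sc ci (V z))); (-ai, A (V x) (Sc cmi (V z)))] : seq (R * ex)).
relE ([:: (1, A (Sc (ar +i* ai)%C (V x)) (Sc ci (V z))); (-1, A (Sc (ar +i* ai)%C (V x)) (Sc cmi (V z)));
   (-ar, A (V x) (Sc ci (V z))); (ar, A (V x) (Sc cmi (V z)));
   (-ai, A (V x) (Sc c1 (V z))); (ai, A (V x) (Sc cm1 (V z)))] : seq (R * ex)).
gen_L => *; apply: cplx_eq => /=; lra.
Qed.

Lemma inner_conj (x y : sv) : l2 x -> l2 y -> inner y x = ((inner x y)^*)%C.
Proof.
move=> hx hy; apply: (mulfI four_neq0).
rewrite -[X in X * (_^*)%C](conjc_nat _ 4) -rmorphM /= !inner4.
relE ([:: (1, A (V y) (Sc c1 (V x))); (-1, A (V y) (Sc cm1 (V x)));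
   (-1, A (V x) (Sc c1 (V y))); (1, A (V x) (Sc cm1 (V y)))] : seq (R * ex)).
relE ([:: (1, A (V y) (Sc ci (V x))); (-1, A (V y) (Sc cmi (V x)));
   (1, A (V x) (Sc ci (V y))); (-1, A (V x) (Sc cmi (V y)))] : seq (R * ex)).
gen_L => *; apply: cplx_eq => /=; lra.
Qed.

Lemma inner_self (x : sv) : l2 x -> inner x x = (l2norm2 x)%:C%C.
Proof.
move=> hx; apply: (mulfI four_neq0); rewrite !inner4.
relE ([:: (1, A (V x) (Sc c1 (V x))); (-1, A (V x) (Sc cm1 (V x)));
   (-4, V x)] : seq (R * ex)).
relE ([:: (1, A (V x) (Sc ci (V x))); (-1, A (V x) (Sc cmi (V x)))] : seq (R * ex)).
gen_L => *; apply: cplx_eq => /=; lra.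
Qed.

Lemma vn_fs (c : C) (a b : sv) : cabs2 c = 1 ->
  vnorm2 (sadd (fshift a) (sscale c b) 0%N) = vnorm2 (b 0%N).
Proof.
move=> hc; rewrite /vnorm2; apply: eq_bigr => i _.
rewrite /sadd /sscale /fshift !mxE add0r cabs2_mul hc mul1r //.
Qed.

Lemma l2_fs (a : sv) : l2 a -> l2 (fshift a).
Proof. by case/l2_fshift. Qed.
Lemma l2_bs (a : sv) : l2 a -> l2 (bshift a).
Proof. by case/l2_bshift. Qed.

Lemma LL_fs (c : C) (a b : sv) : l2 a -> l2 b -> cabs2 c = 1 ->
  LL c (fshift a) b = vnorm2 (b 0%N) + LL c a (bshift b).
Proof.
move=> ha hb hc.
have hs : l2 (sadd (fshift a) (sscale c b)) by apply: l2_as => //; exact: l2_fs.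
by rewrite (proj2 (l2_bshift _ hs)) vn_fs.
Qed.

Lemma inner_fshift (a b : sv) : l2 a -> l2 b -> inner (fshift a) b = inner a (bshift b).
Proof.
move=> ha hb.
apply: (mulfI four_neq0).
apply: (etrans (inner4 (fshift a) b)); apply: esym; apply: (etrans (inner4 a (bshift b))); apply: esym.
have h1 : cabs2 c1 = 1 by rewrite /cabs2 /=; ring.
have h2 : cabs2 cm1 = 1 by rewrite /cabs2 /=; ring.
have h3 : cabs2 ci = 1 by rewrite /cabs2 /=; ring.
have h4 : cabs2 cmi = 1 by rewrite /cabs2 /=; ring.
move: (LL_fs c1 a b ha hb h1) (LL_fs cm1 a b ha hb h2) (LL_fs ci a b ha hb h3) (LL_fs cmi a b ha hb h4).
generalize (vnorm2 (b 0%N)) => v; gen_L.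
move=> -> -> -> ->; apply: cplx_eq => /=; ring.
Qed.

Lemma inner_addr (x x' z : sv) : l2 x -> l2 x' -> l2 z ->
  inner z (sadd x x') = inner z x + inner z x'.
Proof.
move=> hx hx' hz; rewrite (inner_conj _ _ (l2_add _ _ hx hx') hz) inner_addl //.
by rewrite rmorphD /= -!inner_conj.
Qed.

Lemma inner_scaler (a : C) (x z : sv) : l2 x -> l2 z ->
  inner z (sscale a x) = (a^*)%C * inner z x.
Proof.
move=> hx hz; rewrite (inner_conj _ _ (l2_scale _ _ hx) hz) inner_scalel //.
by rewrite rmorphM /= -inner_conj.
Qed.

Lemma ssubE (x y : sv) : ssub x y = sadd x (sscale (-1) y).
Proof. by apply/funext => k; rewrite /ssub /sadd /sscale scaleN1r. Qed.

Lemma inner_subl (x y z : sv) : l2 x -> l2 y -> l2 z ->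
  inner (ssub x y) z = inner x z - inner y z.
Proof.
move=> hx hy hz; rewrite ssubE inner_addl ?inner_scalel ?mulN1r //; exact: l2_scale.
Qed.

Lemma inner_subr (x y z : sv) : l2 x -> l2 y -> l2 z ->
  inner z (ssub x y) = inner z x - inner z y.
Proof.
move=> hx hy hz; rewrite ssubE inner_addr ?inner_scaler ?rmorphN ?rmorph1 ?mulN1r //;
exact: l2_scale.
Qed.

Lemma inner_self_eq0 (d : sv) : l2 d -> inner d d = 0 -> d = @szero R n.
Proof.
move=> hd h; apply: l2norm2_eq0 => //.
by move: h; rewrite inner_self // => -[].
Qed.

Lemma inner_ext (d : sv) : l2 d -> (forall a, l2 a -> inner a d = 0) -> d = @szero R n.
Proof. by move=> hd h; apply: inner_self_eq0 => //; exact: h. Qed.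

Lemma eq_of_sub0 (x y : sv) : ssub x y = @szero R n -> x = y.
Proof.
move=> h; apply/funext => k; have := congr1 (fun f => f k) h.
by rewrite /ssub /szero => /eqP; rewrite subr_eq0 => /eqP.
Qed.

Lemma inner_exp (c : C) (p q r s : sv) : l2 p -> l2 q -> l2 r -> l2 s ->
  inner (sadd p (sscale c q)) (sadd r (sscale c s)) =
  inner p r + (c^*)%C * inner p s + c * inner q r + c * (c^*)%C * inner q s.
Proof.
move=> hp hq hr hs.
have hcq := l2_scale c _ hq; have hcs := l2_scale c _ hs.
have e1 := inner_addl p (sscale c q) (sadd r (sscale c s)) hp hcq (l2_as _ _ _ hr hs).
have e2 := inner_addr r (sscale c s) p hr hcs hp.
have e3 := inner_addr r (sscale c s) (sscale c q) hr hcs hcq.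
have e4 := inner_scaler c s p hs hp.
have e5 := inner_scalel c q r hq hr.
have e6 := inner_scalel c q (sscale c s) hq hcs.
have e7 := inner_scaler c s q hs hq.
rewrite e1 e2 e3 e4 e5 e6 e7.
generalize (inner p r) (inner p s) (inner q r) (inner q s) => a1 a2 a3 a4; ring.
Qed.

Lemma ge0_conj (z : C) : 0 <= z -> (z^*)%C = z.
Proof. by case: z => a b; rewrite lecE /= => /andP[/eqP -> _]; apply: cplx_eq; rewrite /= ?oppr0. Qed.

Lemma lin_add (T : sv -> sv) x y : bounded_linear T -> l2 x -> l2 y ->
  T (sadd x y) = sadd (T x) (T y).
Proof.
case=> _ hl _ hx hy.
have e : forall z : sv, sscale 1 z = z by move=> z; apply/funext => k; rewrite /sscale scale1r.
by have := hl 1 x y hx hy; rewrite !e.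
Qed.

Lemma lin_as (T : sv -> sv) (c : C) x y : bounded_linear T -> l2 x -> l2 y ->
  T (sadd x (sscale c y)) = sadd (T x) (sscale c (T y)).
Proof.
case=> _ hl _ hx hy.
by rewrite sadd_comm (hl c y x hy hx) sadd_comm.
Qed.

Lemma v_self (v : 'cV[C]_n) : v = v + v -> v = 0.
Proof. by move=> h; apply: (addrI v); rewrite addr0 -h. Qed.

Lemma lin_0 (T : sv -> sv) : bounded_linear T -> T (@szero R n) = @szero R n.
Proof.
case=> _ hl _.
have := hl 1 _ _ l2_0 l2_0.
have -> : sadd (sscale 1 (@szero R n)) (@szero R n) = @szero R n
  by apply/funext => k; rewrite /sadd /sscale /szero scaler0 addr0.
move=> h; apply/funext => k; apply: v_self.
by have := congr1 (fun f => f k) h; rewrite /sadd /sscale scale1r.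
Qed.

Lemma lin_scale (T : sv -> sv) (c : C) x : bounded_linear T -> l2 x ->
  T (sscale c x) = sscale c (T x).
Proof.
move=> hT hx; have := lin_as T c _ _ hT l2_0 hx.
have e1 : sadd (@szero R n) (sscale c x) = sscale c x
  by apply/funext => k; rewrite /sadd /szero add0r.
have e2 : sadd (@szero R n) (sscale c (T x)) = sscale c (T x)
  by apply/funext => k; rewrite /sadd /szero add0r.
by rewrite e1 (lin_0 _ hT) e2.
Qed.

Lemma lin_sub (T : sv -> sv) x y : bounded_linear T -> l2 x -> l2 y ->
  T (ssub x y) = ssub (T x) (T y).
Proof.
move=> hT hx hy; rewrite !ssubE lin_as //.
Qed.

Lemma lin_l2 (T : sv -> sv) x : bounded_linear T -> l2 x -> l2 (T x).
Proof. by case=> h _ _; exact: h. Qed.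

Lemma pos_selfadj (T : sv -> sv) : bounded_linear T ->
  (forall x, l2 x -> 0 <= inner (T x) x) ->
  forall x y, l2 x -> l2 y -> inner (T x) y = inner x (T y).
Proof.
move=> hT hpos.
have B0 : forall x, l2 x -> inner (T x) x = inner x (T x).
  move=> x hx; rewrite (inner_conj _ _ (lin_l2 _ _ hT hx) hx) ge0_conj //; exact: hpos.
move=> x y hx hy.
have hTx := lin_l2 _ _ hT hx; have hTy := lin_l2 _ _ hT hy.
have key : forall c : C, (c^*)%C * (inner (T x) y - inner x (T y)) + c * (inner (T y) x - inner y (T x)) = 0.
  move=> c; have hxy : l2 (sadd x (sscale c y)) by exact: l2_as.
  have h := B0 _ hxy.
  rewrite (lin_as T c x y hT hx hy) in h.
  rewrite (inner_exp c (T x) (T y) x y hTx hTy hx hy) (inner_exp c x y (T x) (T y) hx hy hTx hTy) in h.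
  rewrite (B0 x hx) (B0 y hy) in h.
  move: h; gen_I; move=> h; move/eqP: h; rewrite -subr_eq0 => /eqP h.
  rewrite -h; ring.
have k1 := key 1; have k2 := key ci.
rewrite conjc1 in k1.
have hu : inner (T x) y - inner x (T y) = 0.
  move: k1 k2; generalize (inner (T x) y - inner x (T y)) (inner (T y) x - inner y (T x)) => u v.
  move=> k1 k2.
  case: u v k1 k2 => a b [c d]; rewrite /ci /= => k1 k2.
  have := congr1 (@complex.Re R) k1; have := congr1 (@complex.Im R) k1;
  have := congr1 (@complex.Re R) k2; have := congr1 (@complex.Im R) k2; rewrite /= => *.
  apply: cplx_eq => /=; lra.
by apply/eqP; rewrite -subr_eq0; apply/eqP.
Qed.

End L2.

Arguments l2_0 {R n}. Arguments l2_lin {R n}. Arguments l2_as {R n}. Arguments l2_add {R n}.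
Arguments l2_scale {R n}. Arguments l2_sub {R n}. Arguments l2_fs {R n}. Arguments l2_bs {R n}.
Arguments l2norm2_ge0 {R n}. Arguments l2norm2_eq0 {R n}. Arguments inner_addl {R n}.
Arguments inner_scalel {R n}. Arguments inner_conj {R n}. Arguments inner_self {R n}.
Arguments inner_fshift {R n}. Arguments inner_addr {R n}. Arguments inner_scaler {R n}.
Arguments ssubE {R n}. Arguments inner_subl {R n}. Arguments inner_subr {R n}.
Arguments inner_self_eq0 {R n}. Arguments inner_ext {R n}. Arguments eq_of_sub0 {R n}.
Arguments lin_add {R n}. Arguments lin_as {R n}. Arguments lin_0 {R n}. Arguments lin_scale {R n}.
Arguments lin_sub {R n}. Arguments lin_l2 {R n}. Arguments pos_selfadj {R n}.
Arguments inner_exp {R n}. Arguments sadd_comm {R n}. Arguments ge0_conj {R}. Arguments cplx_eq {R}.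

Section Aux.
Variable R : realType.
Local Notation C := R[i].
Variable n : nat.
Local Notation sv := (seqv R n).

Lemma inner_0r (z : sv) : inner z (@szero R n) = 0.
Proof.
have e : forall c : C, sadd z (sscale c (@szero R n)) = z.
  by move=> c; apply/funext => k; rewrite /sadd /sscale /szero scaler0 addr0.
rewrite /inner; under eq_bigr do rewrite e.
rewrite -mulr_suml.
have -> : \sum_(k < 4) ('i ^+ k : C) = 0.
  rewrite !big_ord_recl big_ord0 !lift0 [nat_of_ord ord0]/= expr0 expr1 sqr_i i3.
  ring.
by rewrite mul0r mulr0.
Qed.

Opaque inner l2norm2.

Lemma inner_0l (z : sv) : l2 z -> inner (@szero R n) z = 0.
Proof. by move=> hz; rewrite (inner_conj _ _ hz l2_0) inner_0r conjc0. Qed.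

Lemma proj_l2 (S : set sv) P x : (forall m, S m -> l2 m) -> is_orth_proj S P -> l2 x -> l2 (P x).
Proof. by move=> Sl2 hP hx; apply: Sl2; case: (hP x hx). Qed.

Lemma proj_perp (S : set sv) P y : (forall m, S m -> l2 m) -> is_orth_proj S P -> l2 y ->
  (forall m, S m -> inner y m = 0) -> P y = @szero R n.
Proof.
move=> Sl2 hP hy hperp; have [hS ho] := hP y hy.
have hPy := Sl2 _ hS.
apply: inner_self_eq0 => //.
have := ho _ hS; rewrite (inner_subl _ _ _ hy hPy hPy) (hperp _ hS) sub0r.
by move/eqP; rewrite oppr_eq0 => /eqP.
Qed.

Lemma proj_fix (S : set sv) P : (forall m, S m -> l2 m) ->
  (forall a b, S a -> S b -> S (ssub a b)) -> is_orth_proj S P ->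
  forall m, S m -> P m = m.
Proof.
move=> Sl2 Ssub hP m hm; have hml := Sl2 _ hm; have [hS ho] := hP m hml.
apply: esym; apply: eq_of_sub0; apply: inner_self_eq0.
  by apply: l2_sub => //; exact: Sl2.
exact: ho (Ssub _ _ hm hS).
Qed.

Lemma proj_sa (S : set sv) P : (forall m, S m -> l2 m) -> is_orth_proj S P ->
  forall x y, l2 x -> l2 y -> inner (P x) y = inner x (P y).
Proof.
move=> Sl2 hP x y hx hy.
have [hSx ox] := hP x hx; have [hSy oy] := hP y hy.
have hPx := Sl2 _ hSx; have hPy := Sl2 _ hSy.
have e1 := ox _ hSy; rewrite (inner_subl _ _ _ hx hPx hPy) in e1.
have e2 := oy _ hSx; rewrite (inner_subl _ _ _ hy hPy hPx) in e2.
move/eqP: e1; rewrite subr_eq0 => /eqP e1.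
move/eqP: e2; rewrite subr_eq0 => /eqP e2.
have c1 := inner_conj _ _ hy hPx.
have c2 := inner_conj _ _ hPy hPx.
apply: (etrans c1); rewrite e2 -c2; exact: (esym e1).
Qed.

Lemma perp_in (S : set sv) P z : (forall m, S m -> l2 m) -> is_orth_proj S P -> l2 z ->
  (forall y, l2 y -> (forall m, S m -> inner y m = 0) -> inner z y = 0) -> S z.
Proof.
move=> Sl2 hP hz h; have [hS ho] := hP z hz; have hPz := Sl2 _ hS.
have hr : l2 (ssub z (P z)) by exact: l2_sub.
have e : ssub z (P z) = @szero R n.
  apply: inner_self_eq0 => //.
  rewrite (inner_subr _ _ _ hz hPz hr) (ho _ hS) (inner_conj _ _ hz hr) (h _ hr ho).
  by rewrite conjc0 subr0.
by rewrite (eq_of_sub0 _ _ e).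
Qed.

Lemma sq_selfadj (T : sv -> sv) : bounded_linear T ->
  (forall x y, l2 x -> l2 y -> inner (T x) y = inner x (T y)) ->
  forall x y, l2 x -> l2 y -> inner (T (T x)) y = inner x (T (T y)).
Proof.
move=> hT hsa x y hx hy.
have hTx := lin_l2 _ _ hT hx; have hTy := lin_l2 _ _ hT hy.
by rewrite (hsa _ _ hTx hy) (hsa _ _ hx hTy).
Qed.

End Aux.

Arguments l2_0 {R n}. Arguments l2_lin {R n}. Arguments l2_as {R n}. Arguments l2_add {R n}.
Arguments l2_scale {R n}. Arguments l2_sub {R n}. Arguments l2_fs {R n}. Arguments l2_bs {R n}.
Arguments l2norm2_ge0 {R n}. Arguments l2norm2_eq0 {R n}. Arguments inner_addl {R n}.
Arguments inner_scalel {R n}. Arguments inner_conj {R n}. Arguments inner_self {R n}.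
Arguments inner_fshift {R n}. Arguments inner_addr {R n}. Arguments inner_scaler {R n}.
Arguments ssubE {R n}. Arguments inner_subl {R n}. Arguments inner_subr {R n}.
Arguments inner_self_eq0 {R n}. Arguments inner_ext {R n}. Arguments eq_of_sub0 {R n}.
Arguments lin_add {R n}. Arguments lin_as {R n}. Arguments lin_0 {R n}. Arguments lin_scale {R n}.
Arguments lin_sub {R n}. Arguments lin_l2 {R n}. Arguments pos_selfadj {R n}.
Arguments inner_exp {R n}. Arguments sadd_comm {R n}. Arguments ge0_conj {R}. Arguments cplx_eq {R}.
Arguments vnorm2_eq0 {R n}. Arguments limE {R f L}.
Arguments inner_0r {R n}. Arguments inner_0l {R n}. Arguments proj_l2 {R n}. Arguments proj_perp {R n}.
Arguments proj_fix {R n}. Arguments proj_sa {R n}. Arguments perp_in {R n}. Arguments sq_selfadj {R n}.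

Theorem lemma4p3 (R : realType) (p q : nat) (G : R -> 'M[R[i]]_(q, p))
  (H : seqv R p -> seqv R q) (Hs : seqv R q -> seqv R p)
  (M : set (seqv R p)) (PM RM : seqv R p -> seqv R p)
  (Qs D D0 E : seqv R p -> seqv R p) :
  Linf G ->
  is_hankel G H ->                       (* H f = P_-(G f) *)
  is_adjoint H Hs ->                     (* Hs = H^* *)
  closed_subspace M ->
  (forall x, M x -> M (bshift x)) ->     (* S^* M ⊂ M *)
  (forall x, l2 x -> bshift x = @szero R p -> M x) ->  (* ker S^* ⊂ M *)
  is_orth_proj M PM ->                   (* PM = P_M *)
  is_orth_proj (@bshift R p @` M) RM ->       (* RM = R_M *)
  is_adjoint (fun x => fshift (RM x)) Qs -> (* Qs = Q_M^*, Q_M = S R_M *)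
  let g := opnorm_on M H in              (* gamma_M *)
  is_pos_sqrt D
    (fun x => ssub (sscale (g ^+ 2)%:C%C x) (PM (Hs (H (PM x))))) ->
  is_pos_sqrt D0
    (fun x => ssub (sscale (g ^+ 2)%:C%C x)
                   (bshift (PM (Hs (H (PM (fshift x))))))) ->
  is_inverse D0 E ->                     (* D°_M invertible, E = (D°_M)^{-1} *)
  let F := [set y | exists2 x, l2 x & y = D (fshift (RM x))] in
  l2closed F /\
  is_orth_proj F (fun x => D (fshift (RM (E (E (Qs (D x))))))).
Proof.
move=> hG hH hadj hM hSM hker hPM hRM hQs g hD hD0 hE F.
case: hadj => Hsl2 Hadj.
case: hM => [[Ml2 M0 Mlin] _].
case: hQs => Qsl2 Qsadj.
have Qsadj' : forall x y, l2 x -> l2 y -> inner (fshift (RM x)) y = inner x (Qs y) := Qsadj.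
case: hD => Dbl Dpos Dsq.
case: hD0 => D0bl D0pos D0sq.
case: hE => Ebl Einv.
have Dsq' : forall x, l2 x -> D (D x) = ssub (sscale (g ^+ 2)%:C%C x) (PM (Hs (H (PM x)))) := Dsq.
have D0sq' : forall x, l2 x -> D0 (D0 x) =
  ssub (sscale (g ^+ 2)%:C%C x) (bshift (PM (Hs (H (PM (fshift x)))))) := D0sq.
have Msub : forall a b, M a -> M b -> M (ssub a b).
  move=> a b ha hb.
  have -> : ssub a b = sadd (sscale (-1) b) a
    by apply/funext => k; rewrite /ssub /sadd /sscale scaleN1r addrC.
  exact: Mlin.
have Nl2 : forall m, (@bshift R p @` M) m -> l2 m.
  by move=> m [m' hm' <-]; exact: l2_bs (Ml2 _ hm').
have Nsub : forall a b, (@bshift R p @` M) a -> (@bshift R p @` M) b ->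
    (@bshift R p @` M) (ssub a b).
  by move=> a b [a' ha' <-] [b' hb' <-]; exists (ssub a' b'); [exact: Msub|].
have hSN : forall u, (@bshift R p @` M) u -> M (fshift u).
  move=> u [m hm <-].
  pose e : seqv R p := fun k => if k is 0%N then m 0%N else 0.
  have hml := Ml2 _ hm.
  have ee : e = ssub m (fshift (bshift m))
    by apply/funext => -[|k]; rewrite /e /ssub /fshift /bshift ?subr0 ?subrr.
  have el2 : l2 e by rewrite ee; apply: l2_sub => //; apply: l2_fs; exact: l2_bs.
  have Me : M e by apply: hker => //; apply/funext => k.
  have -> : fshift (bshift m) = ssub m e
    by apply/funext => -[|k]; rewrite /e /ssub /fshift /bshift ?subr0 ?subrr.
  exact: Msub.
have PMfix := proj_fix _ _ Ml2 Msub hPM.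
have RMfix := proj_fix _ _ Nl2 Nsub hRM.
have RMsa := proj_sa _ _ Nl2 hRM.
have RMl2 : forall x, l2 x -> l2 (RM x) := fun x hx => proj_l2 _ _ x Nl2 hRM hx.
have RMin : forall x, l2 x -> (@bshift R p @` M) (RM x) := fun x hx => (hRM x hx).1.
have Dsa := pos_selfadj _ Dbl Dpos.
have D0sa := pos_selfadj _ D0bl D0pos.
have H0 : H (@szero R p) = @szero R q.
  apply/funext => k; have h := hH _ l2_0 k.
  have e : (fun N0 : nat => vnorm2 (\sum_(j < N0) fcoef G (- ((k + j + 1)%N)%:Z) *m (@szero R p) j
      - H (@szero R p) k)) = fun _ => vnorm2 (- H (@szero R p) k).
    apply/funext => N0; rewrite big1 ?sub0r // => j _; exact: mulmx0.
  rewrite e in h.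
  have e1 := limE h.
  have e2 := limE (cvg_cst (vnorm2 (- H (@szero R p) k))).
  rewrite e2 in e1.
  have := vnorm2_eq0 _ e1.
  by move/eqP; rewrite oppr_eq0 => /eqP.
have Hs0 : Hs (@szero R q) = @szero R p.
  apply: inner_ext; first exact: Hsl2 _ l2_0.
  move=> a ha; rewrite -(Hadj a (@szero R q) ha l2_0); exact: inner_0r.
have PM0 : PM (@szero R p) = @szero R p :=
  proj_perp _ _ _ Ml2 hPM l2_0 (fun m hm => inner_0l _ (Ml2 _ hm)).
have Qperp : forall y, l2 y -> (forall m, M m -> inner y m = 0) ->
    D (D y) = sscale (g ^+ 2)%:C%C y.
  move=> y hy hperp; rewrite (Dsq' y hy) (proj_perp _ _ _ Ml2 hPM hy hperp) H0 Hs0 PM0.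
  by apply/funext => k; rewrite /ssub /szero subr0.
have QM : forall m, M m -> M (D (D m)).
  move=> m hm; have hml := Ml2 _ hm.
  have hDm : l2 (D (D m)) by do 2 apply: (lin_l2 _ _ Dbl).
  apply: (perp_in _ _ _ Ml2 hPM hDm) => y hy hperp.
  rewrite (sq_selfadj _ Dbl Dsa _ _ hml hy) (Qperp _ hy hperp) (inner_scaler _ _ _ hy hml).
  by rewrite (inner_conj _ _ hy hml) (hperp _ hm) conjc0 mulr0.
have Q0E : forall u, l2 u -> D0 (D0 u) = bshift (D (D (fshift u))).
  by move=> u hu; rewrite (D0sq' u hu) (Dsq' (fshift u) (l2_fs _ hu)).
have Q0N : forall u, (@bshift R p @` M) u -> (@bshift R p @` M) (D0 (D0 u)).
  move=> u hu; rewrite (Q0E u (Nl2 _ hu)); exists (D (D (fshift u))) => //.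
  exact: QM (hSN u hu).
have QsE : forall b, l2 b -> Qs b = RM (bshift b).
  move=> b hb; have hQb := Qsl2 b hb; have hbs := l2_bs _ hb; have hR := RMl2 _ hbs.
  apply: eq_of_sub0; apply: inner_ext; first exact: l2_sub.
  move=> a ha; rewrite (inner_subr _ _ _ hQb hR ha).
  rewrite -(Qsadj' a b ha hb) (inner_fshift _ _ (RMl2 _ ha) hb) -(RMsa _ _ ha hbs).
  by rewrite subrr.
have adjQ : forall w z, l2 w -> l2 z -> inner w (fshift (RM z)) = inner (Qs w) z.
  move=> w z hw hz; have hfz : l2 (fshift (RM z)) := l2_fs _ (RMl2 _ hz).
  rewrite (inner_conj _ _ hfz hw) (Qsadj' z w hz hw).
  by rewrite -(inner_conj _ _ hz (Qsl2 _ hw)).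
have key : forall x, l2 x -> Qs (D (D (fshift (RM (E (E (Qs (D x)))))))) = Qs (D x).
  move=> x hx.
  have hDx := lin_l2 _ _ Dbl hx.
  have hv := Qsl2 _ hDx.
  have Nv : (@bshift R p @` M) (Qs (D x)) by rewrite (QsE _ hDx); exact: RMin _ (l2_bs _ hDx).
  have hEv := lin_l2 _ _ Ebl hv.
  have hy := lin_l2 _ _ Ebl hEv.
  have hu := RMl2 _ hy.
  have Nu := RMin _ hy.
  have eQ0y : D0 (D0 (E (E (Qs (D x))))) = Qs (D x).
    by rewrite (Einv _ hEv).2 (Einv _ hv).2.
  have hd : l2 (ssub (E (E (Qs (D x)))) (RM (E (E (Qs (D x)))))) by exact: l2_sub.
  have Q0d : D0 (D0 (ssub (E (E (Qs (D x)))) (RM (E (E (Qs (D x))))))) =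
      ssub (Qs (D x)) (D0 (D0 (RM (E (E (Qs (D x))))))).
    rewrite (lin_sub _ _ _ D0bl hy hu).
    rewrite (lin_sub _ _ _ D0bl (lin_l2 _ _ D0bl hy) (lin_l2 _ _ D0bl hu)).
    by rewrite eQ0y.
  have hD0d := lin_l2 _ _ D0bl hd.
  have hN := Nsub _ _ Nv (Q0N _ Nu).
  have e0 : inner (D0 (ssub (E (E (Qs (D x)))) (RM (E (E (Qs (D x)))))))
                  (D0 (ssub (E (E (Qs (D x)))) (RM (E (E (Qs (D x))))))) = 0.
    rewrite -(D0sa _ _ hD0d hd) Q0d.
    have h0 := (hRM _ hy).2 _ hN.
    by rewrite (inner_conj _ _ hd (Nl2 _ hN)) h0 conjc0.
  have D0d := inner_self_eq0 _ hD0d e0.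
  have d0 : ssub (E (E (Qs (D x)))) (RM (E (E (Qs (D x))))) = @szero R p.
    by rewrite -(Einv _ hd).1 D0d (lin_0 _ Ebl).
  have yu := eq_of_sub0 _ _ d0.
  rewrite (QsE _ (lin_l2 _ _ Dbl (lin_l2 _ _ Dbl (l2_fs _ hu)))).
  rewrite -(Q0E _ hu) (RMfix _ (Q0N _ Nu)).
  by rewrite -yu eQ0y.
have proj : forall x, l2 x -> F (D (fshift (RM (E (E (Qs (D x))))))) /\
    forall m, F m -> inner (ssub x (D (fshift (RM (E (E (Qs (D x)))))))) m = 0.
  move=> x hx.
  have hEE : l2 (E (E (Qs (D x)))).
    by apply: (lin_l2 _ _ Ebl); apply: (lin_l2 _ _ Ebl); apply: Qsl2; exact: lin_l2 _ _ Dbl hx.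
  have hPx : l2 (D (fshift (RM (E (E (Qs (D x))))))).
    by apply: (lin_l2 _ _ Dbl); apply: l2_fs; exact: RMl2.
  split; first by exists (E (E (Qs (D x)))).
  move=> m [z hz ->].
  have hw : l2 (fshift (RM z)) := l2_fs _ (RMl2 _ hz).
  rewrite (inner_subl _ _ _ hx hPx (lin_l2 _ _ Dbl hw)).
  rewrite -(Dsa _ _ hx hw) -(Dsa _ _ hPx hw).
  rewrite (adjQ _ _ (lin_l2 _ _ Dbl hx) hz) (adjQ _ _ (lin_l2 _ _ Dbl hPx) hz).
  by rewrite (key _ hx) subrr.
split; last exact: proj.
move=> us x hF hx hcv.
have [hPxF horth] := proj x hx.
have Fl2 : forall m, F m -> l2 m.
  by move=> m [z hz ->]; apply: (lin_l2 _ _ Dbl); apply: l2_fs; exact: RMl2.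
have hPx := Fl2 _ hPxF.
have hd : l2 (ssub x (D (fshift (RM (E (E (Qs (D x)))))))) by exact: l2_sub.
have e1 : inner (ssub x (D (fshift (RM (E (E (Qs (D x))))))))
                (ssub x (D (fshift (RM (E (E (Qs (D x)))))))) =
          inner (ssub x (D (fshift (RM (E (E (Qs (D x))))))))  x.
  apply: (etrans (inner_subr _ _ _ hx hPx hd)); rewrite (horth _ hPxF); exact: subr0.
have bound : forall k, l2norm2 (ssub x (D (fshift (RM (E (E (Qs (D x)))))))) <=
                       l2norm2 (ssub (us k) x).
  move=> k; have hu := Fl2 _ (hF k).
  have he : l2 (ssub (us k) x) by exact: l2_sub.
  have ek1 : inner (ssub x (D (fshift (RM (E (E (Qs (D x))))))))  (ssub (us k) x) =
      - inner (ssub x (D (fshift (RM (E (E (Qs (D x))))))))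
              (ssub x (D (fshift (RM (E (E (Qs (D x)))))))).
    apply: (etrans (inner_subr _ _ _ hu hx hd)); rewrite (horth _ (hF k)) e1; exact: sub0r.
  have ek2 : inner (ssub (us k) x) (ssub x (D (fshift (RM (E (E (Qs (D x)))))))) =
      - inner (ssub x (D (fshift (RM (E (E (Qs (D x))))))))
              (ssub x (D (fshift (RM (E (E (Qs (D x)))))))).
    have hr := esym (inner_conj _ _ hd hd).
    rewrite (inner_conj _ _ hd he) ek1; move: hr.
    generalize (inner (ssub x (D (fshift (RM (E (E (Qs (D x))))))))
              (ssub x (D (fshift (RM (E (E (Qs (D x))))))))) => -[r s] ha.
    have := congr1 (@complex.Im R) ha; rewrite /= => hs.
    by apply: cplx_eq => /=; lra.
  have hde := l2_add _ _ hd he.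
  have ex := inner_addl _ _ _ hd he hde.
  rewrite (inner_addr _ _ _ hd he hd) (inner_addr _ _ _ hd he he) ek1 ek2 in ex.
  rewrite !inner_self // in ex.
  have h0 := l2norm2_ge0 _ hde.
  move: ex h0; generalize (l2norm2 (sadd (ssub x (D (fshift (RM (E (E (Qs (D x)))))))) (ssub (us k) x))).
  generalize (l2norm2 (ssub x (D (fshift (RM (E (E (Qs (D x))))))))).
  generalize (l2norm2 (ssub (us k) x)).
  move=> a b c ex h0.
  have := congr1 (@complex.Re R) ex; rewrite /= => ex'.
  lra.
have hsq : (fun k => l2norm (ssub (us k) x) * l2norm (ssub (us k) x)) @ \oo --> (0:R).
  by rewrite -(mulr0 0); apply: cvgM.
have hle : l2norm2 (ssub x (D (fshift (RM (E (E (Qs (D x)))))))) <= 0.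
  rewrite -(limE hsq); apply: limr_ge; first by apply/cvg_ex; exists 0.
  apply: nearW => k; rewrite /l2norm -expr2 sqr_sqrtr; first exact: bound.
  apply: l2norm2_ge0; apply: l2_sub => //; exact: Fl2 _ (hF k).
have hz : l2norm2 (ssub x (D (fshift (RM (E (E (Qs (D x)))))))) = 0.
  by apply/eqP; rewrite eq_le hle l2norm2_ge0.
have := eq_of_sub0 _ _ (l2norm2_eq0 _ hd hz).
by move=> ->.
Qed.
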